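(* Let $y_n$ denote the number of unlabelled rooted trees (Pólya trees) with $n$ vertices and $y(x)=\sum_{n\ge1}y_nx^n$. Then there is no formal power series $\phi(z)=\sum_{j\ge0}\phi_jz^j$ with non-negative coefficients $\phi_j\ge 0$ such that $y(x)=x\,\phi(y(x))$. In other words, Pólya trees are not simply generated.
   Context: A Pólya tree is an unlabelled rooted tree, i.e. rooted trees are counted up to root-preserving isomorphism. The generating function satisfies $y(x)=x\exp\left(\sum_{i\ge1}y(x^i)/i\right)$, and $y(x)=x+x^2+2x^3+4x^4+9x^5+\cdots$. A class of trees is called simply generated if its generating function $y(x)$ satisfies $y(x)=x\phi(y(x))$ for some power series $\phi$ with non-negative coefficients. *)

(* Defs.v *)
From Stdlib Require List.
From Stdlib Require Import Permutation.
From HB Require Import structures.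
From mathcomp Require Import all_boot all_order all_algebra.
Set Implicit Arguments. Unset Strict Implicit. Unset Printing Implicit Defensive.
Import Order.TTheory GRing.Theory Num.Theory.

Inductive rtree : Type := Node of seq rtree.

Fixpoint tsize (t : rtree) : nat :=
  let: Node l := t in (sumn (map tsize l)).+1.

(* Root-preserving isomorphism of rooted trees: the children lists match
   up to a permutation, with corresponding subtrees isomorphic. *)
Inductive tiso : rtree -> rtree -> Prop :=
| tiso_node (l1 l2 l : seq rtree) :
    Permutation l2 l -> List.Forall2 tiso l1 l -> tiso (Node l1) (Node l2).

(* [polya_count n k]: there are exactly k unlabelled rooted trees (Polya
   trees) with n vertices, i.e. k isomorphism classes of rooted trees of
   size n: a list of k pairwise non-isomorphic trees of size n such that
   every tree of size n is isomorphic to one of them. *)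
Definition polya_count (n k : nat) : Prop :=
  exists s : seq rtree,
    [/\ size s = k,
        (forall i, i < k -> tsize (nth (Node [::]) s i) = n),
        (forall i j, i < k -> j < k -> i <> j ->
            ~ tiso (nth (Node [::]) s i) (nth (Node [::]) s j)) &
        (forall t, tsize t = n -> exists2 i, i < k & tiso t (nth (Node [::]) s i))].

Local Open Scope ring_scope.

Definition trunc_ps (R : nzRingType) (y : nat -> nat) (N : nat) : {poly R} :=
  \poly_(i < N.+1) (y i)%:R.

(* Coefficient of x^n in phi(y(x)), for y with y_0 = 0 (so that only the
   terms j <= n contribute): sum_{j <= n} phi_j [x^n] y(x)^j. *)
Definition comp_coef (R : nzRingType) (phi : nat -> R) (y : nat -> nat) (n : nat) : R :=
  \sum_(j < n.+1) phi j * ((trunc_ps R y n) ^+ j)`_n.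

(* Main.v *)
Require Import Defs.
From mathcomp Require Import all_boot all_order all_algebra.
Import Order.TTheory GRing.Theory Num.Theory.
From Stdlib Require Import Permutation.
From HB Require Import structures.
From mathcomp Require Import zify ring lra.
Set Implicit Arguments. Unset Strict Implicit.

Section Comb.

Fixpoint rtree_ind' (P : rtree -> Prop)
  (H : forall l, (forall t, List.In t l -> P t) -> P (Node l)) (t : rtree) : P t :=
  match t with Node l => H l ((fix aux (l : seq rtree) : forall t, List.In t l -> P t :=
     match l return forall t, List.In t l -> P t with
     | [::] => fun t (F : False) => False_ind _ F
     | a :: l' => fun t Hin => match Hin with
                    | or_introl E => eq_ind a P (rtree_ind' H a) t E
                    | or_intror Hin' => aux l' t Hin' end end) l) end.

Fixpoint tcode (t : rtree) : seq nat :=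
  let: Node l := t in size l :: flatten (map tcode l).

Lemma tcode_inj_aux t1 : forall t2 r1 r2, tcode t1 ++ r1 = tcode t2 ++ r2 -> t1 = t2 /\ r1 = r2.
Proof.
elim/rtree_ind': t1 => l1 IH [l2] r1 r2 /= [Hs].
have: forall r1 r2, size l1 = size l2 -> flatten (map tcode l1) ++ r1 = flatten (map tcode l2) ++ r2 -> l1 = l2 /\ r1 = r2.
  elim: l1 l2 IH {Hs} => [|a l1 IHl] [|b l2] IH rr1 rr2 //= Hsz.
  case: Hsz => Hsz; rewrite -!catA => /IH [|->]; first by left.
  move=> /IHl [] // => [t Ht|->->//]; by apply: IH; right.
by move=> H /(H _ _ Hs) [->->].
Qed.

Lemma tcode_inj : injective tcode.
Proof. by move=> t1 t2 H; case: (@tcode_inj_aux t1 t2 [::] [::]); rewrite ?cats0. Qed.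

HB.instance Definition _ := Equality.copy rtree (inj_type tcode_inj).

Fixpoint lexle (s t : seq nat) : bool :=
  match s, t with
  | [::], _ => true
  | _ :: _, [::] => false
  | a :: s', b :: t' => (a < b) || ((a == b) && lexle s' t')
  end.

Lemma lexle_total : total lexle.
Proof.
elim=> [|a s IH] [|b t] //=; case: (ltngtP a b) => //= ->; rewrite eqxx /=; exact: IH.
Qed.

Lemma lexle_trans : transitive lexle.
Proof.
move=> x y z; elim: x y z => [|a s IH] [|b t] [|c u] //=.
case: (ltngtP b a) => //= Hba; case: (ltngtP a c) => //= Hac.
- by rewrite (ltn_trans Hba Hac).
- by rewrite -Hac Hba.
- by rewrite Hba Hac.
- rewrite Hba Hac ltnn eqxx /=; exact: IH.
Qed.

Lemma lexle_anti : antisymmetric lexle.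
Proof.
elim=> [|a s IH] [|b t] //=; case: (ltngtP a b) => //= -> /IH -> //.
Qed.

Definition tle (t u : rtree) := lexle (tcode t) (tcode u).
Lemma tle_total : total tle. Proof. move=> ??; exact: lexle_total. Qed.
Lemma tle_trans : transitive tle. Proof. move=> ???; exact: lexle_trans. Qed.
Lemma tle_anti : antisymmetric tle.
Proof. by move=> ?? /lexle_anti /tcode_inj. Qed.

Fixpoint canon (t : rtree) : rtree :=
  let: Node l := t in Node (sort tle (map canon l)).

Lemma Perm_perm (T : eqType) (s t : seq T) : Permutation s t -> perm_eq s t.
Proof.
elim=> //= [x l l' _ H|x y l|l l' l'' _ H1 _ H2]; first by rewrite perm_cons.
  by apply/permP => p /=; rewrite addnCA.
exact: seq.perm_trans H1 H2.
Qed.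

Lemma perm_Perm (T : eqType) (s t : seq T) : perm_eq s t -> Permutation s t.
Proof.
elim: s t => [|x s IH] t; first by rewrite perm_sym => /perm_nilP ->.
move=> H; have: x \in t by rewrite -(perm_mem H) mem_head.
move=> Hx; case/splitPr: Hx H => t1 t2 H.
apply: Permutation_cons_app; apply: IH.
by rewrite -(perm_cons x) (seq.perm_trans H) // perm_sym -cat1s perm_catCA.
Qed.

Lemma tiso_canon t : forall u, tiso t u -> canon t = canon u.
Proof.
elim/rtree_ind': t => l1 IH u H; inversion H as [l1' l2 l P F]; subst.
rewrite /=; congr Node.
have E: map canon l1 = map canon l.
  elim: F IH {H} => //= x z k1 k' Hxz _ IHF IH.
  rewrite (IH x (or_introl erefl) z Hxz) IHF // => t Ht; apply: IH; by right.
rewrite E; apply/perm_sortP; [exact: tle_total|exact: tle_trans|exact: tle_anti|].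
by rewrite perm_sym; apply/Perm_perm/Permutation_map.
Qed.

Lemma perm_lift (l1 l2 : seq rtree) :
  (forall t, List.In t l1 -> forall u, canon t = canon u -> tiso t u) ->
  perm_eq (map canon l1) (map canon l2) ->
  exists l, Permutation l2 l /\ List.Forall2 tiso l1 l.
Proof.
elim: l1 l2 => [|x l1 IHl] l2 IH Hp.
  by exists [::]; move: (perm_size Hp); rewrite size_map /=; case: l2 {Hp}.
have: canon x \in map canon l2 by rewrite -(perm_mem Hp) mem_head.
case/mapP=> u Hu Exu.
have Hp2 := perm_to_rem Hu.
have Hp3: perm_eq (map canon l1) (map canon (rem u l2)).
  rewrite -(perm_cons (canon x)) Exu.
  by have := seq.perm_trans Hp (perm_map canon Hp2); rewrite /= Exu.
case: (IHl _ (fun t Ht => IH t (or_intror Ht)) Hp3) => l' [Hl1 Hl2].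
exists (u :: l'); split.
  apply: Permutation_trans (perm_Perm Hp2) _; exact: Permutation.perm_skip.
constructor => //; apply: IH; by [left|].
Qed.

Lemma canon_tiso t : forall u, canon t = canon u -> tiso t u.
Proof.
elim/rtree_ind': t => l1 IH [l2] /= [] /perm_sortP H.
have Hp := H tle_total tle_trans tle_anti.
case: (perm_lift IH Hp) => l [P F]; exact: tiso_node P F.
Qed.

Fixpoint forests (f m : nat) : seq (seq rtree) :=
  match f with
  | 0 => [::]
  | f'.+1 => if m is 0 then [:: [::]] else
      flatten [seq [seq Node c :: r | c <- forests f' k.-1, r <- forests f' (m - k)] | k <- iota 1 m]
  end.

Lemma forests_S f m : forests f.+1 m.+1 =
  flatten [seq [seq Node c :: r | c <- forests f k.-1, r <- forests f (m.+1 - k)] | k <- iota 1 m.+1].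
Proof. by []. Qed.

Lemma forests_complete f : forall m l, sumn (map Defs.tsize l) = m -> m < f -> l \in forests f m.
Proof.
elim: f => [|f IH] m l Hm Hf //.
case: l Hm => [|[c] l] /= Hm; first by rewrite -Hm mem_seq1.
rewrite -Hm addSn; apply/flatten_mapP; exists (sumn (map Defs.tsize c)).+1.
  rewrite mem_iota; lia.
apply/allpairsP; exists (c, l); split => //=; apply: IH => //.
- move: Hf; rewrite -Hm; lia.
- lia.
- move: Hf; rewrite -Hm; lia.
Qed.

Definition Cls (n : nat) : seq rtree :=
  undup [seq canon t | t <- [seq Node c | c <- forests n.+1 n.-1] & Defs.tsize t == n].

Lemma Cls_complete n t : Defs.tsize t = n -> canon t \in Cls n.
Proof.
move=> Ht; rewrite mem_undup; apply: map_f; rewrite mem_filter Ht eqxx andTb.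
case: t Ht => c <-; apply: map_f; apply: forests_complete => //.
Qed.

Lemma Cls_sound n c : c \in Cls n -> exists2 t, Defs.tsize t = n & c = canon t.
Proof.
rewrite mem_undup => /mapP [t]; rewrite mem_filter => /andP[/eqP Ht _] ->; by exists t.
Qed.

Lemma polya_size n k : polya_count n k -> k = size (Cls n).
Proof.
case=> s [Hsz Hsize Hni Hcov].
set S := map canon s.
have uS: uniq S.
  apply/(uniqP (canon (Node [::]))) => i j; rewrite !inE size_map Hsz => Hi Hj.
  rewrite !(nth_map (Node [::])) ?Hsz // => E.
  case: (i =P j) => // Hij; case: (Hni i j Hi Hj Hij); exact: canon_tiso.
have HP: perm_eq S (Cls n).
  apply: uniq_perm => //; first exact: undup_uniq.
  move=> c; apply/idP/idP.
    case/mapP=> t /(nthP (Node [::])) [i Hi <-] ->; apply: Cls_complete.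
    by apply: Hsize; rewrite -Hsz.
  case/Cls_sound=> t Ht ->; case: (Hcov t Ht) => i Hi /tiso_canon ->.
  by apply: map_f; apply: mem_nth; rewrite Hsz.
by rewrite -(perm_size HP) size_map.
Qed.


End Comb.

Unset Implicit Arguments.
Local Open Scope ring_scope.

Lemma coefX_ge0 (R : realFieldType) (p : {poly R}) : (forall i, 0 <= p`_i) -> forall j i, 0 <= (p ^+ j)`_i.
Proof.
move=> Hp; elim=> [|j IH] i; first by rewrite expr0 coefC; case: eqP.
rewrite exprS coefM; apply: sumr_ge0 => k _; exact: mulr_ge0.
Qed.

Lemma alg (y : nat -> nat) (R : realFieldType) (phi : nat -> R) (hphi : forall j, 0 <= phi j)
  (y0 : y 0%N = 0%N) (y1 : y 1%N = 1%N) (y2 : y 2%N = 1%N) (y3 : y 3%N = 2%N) (y4 : y 4%N = 4%N)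
  (y5 : y 5%N = 9%N) (y6 : y 6%N = 20%N) :
  ~ (forall n : nat, (y n.+1)%:R = comp_coef phi y n).
Proof.
move=> H.
have e1 := H 1%N; have e2 := H 2%N; have e5 := H 5%N.
move: e1 e2 e5; rewrite /comp_coef /trunc_ps.
rewrite !big_ord_recr big_ord0 /= !expr0 !expr1 !coefC !coef_poly /=.
set p := \poly_(i < 6) _.
have pge: forall i, 0 <= p`_i by move=> i; rewrite coef_poly; case: ifP.
have g0 := coefX_ge0 _ _ pge 3 5; have g1 := coefX_ge0 _ _ pge 4 5; have g2 := coefX_ge0 _ _ pge 5 5.
set X3 := (p ^+ 3)`_5; set X4 := (p ^+ 4)`_5; set X5 := (p ^+ 5)`_5.
rewrite !big_ord0 !expr2 !coefM !big_ord_recr !big_ord0 /= !coef_poly /=.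
rewrite y0 y1 y2 y3 y4 y5 y6 => e1 e2 e5.
have h3 : 0 <= phi 3%N * X3 by exact: mulr_ge0.
have h4 : 0 <= phi 4%N * X4 by exact: mulr_ge0.
have h5 : 0 <= phi 5%N * X5 by exact: mulr_ge0.
have hp0 := hphi 0%N. clear -e1 e2 e5 h3 h4 h5 hp0.
lra.
Qed.

Lemma cls_0 : size (Cls 0) = 0%N.
Proof. vm_compute. reflexivity. Qed.
Lemma cls_1 : size (Cls 1) = 1%N.
Proof. vm_compute. reflexivity. Qed.
Lemma cls_2 : size (Cls 2) = 1%N.
Proof. vm_compute. reflexivity. Qed.
Lemma cls_3 : size (Cls 3) = 2%N.
Proof. vm_compute. reflexivity. Qed.
Lemma cls_4 : size (Cls 4) = 4%N.
Proof. vm_compute. reflexivity. Qed.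
Lemma cls_5 : size (Cls 5) = 9%N.
Proof. vm_compute. reflexivity. Qed.
Lemma cls_6 : size (Cls 6) = 20%N.
Proof. vm_compute. reflexivity. Qed.

Theorem mainTheorem1 (y : nat -> nat) (hy : forall n, polya_count n (y n))
  (R : realFieldType) (phi : nat -> R) (hphi : forall j, 0 <= phi j) :
  ~ (forall n : nat, (y n.+1)%:R = comp_coef phi y n).
Proof.
apply: (alg _ _ _ hphi); rewrite (polya_size (hy _)); by [apply: cls_0|apply: cls_1|apply: cls_2|apply: cls_3|apply: cls_4|apply: cls_5|apply: cls_6].
Qed.
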